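(* Let $n\ge2$, $0<R<\sqrt{\tfrac38(3n-5)(2n-3)^3}$, let $u_0$ satisfy (C1)–(C6), and let $u$ be the solution of $(\ast)$. Then $u(\cdot,t)\to u^*$ uniformly in $B_R$ as $t\to\infty$, with an exponential rate: there are $c>0$ and $\mu>0$ such that $\sup_{x\in B_R}|u(x,t)-u^*(|x|)|\le c\,e^{-\mu t}$ for all $t\ge0$.
   Context: $B_R=\{x\in\mathbb R^n:|x|<R\}$; radially symmetric functions are written as functions of $r=|x|$ and $t$, $u_r$ is the radial derivative. $\alpha:=\sqrt[3]{9n-15}$, $u^*(r):=-\alpha r^{1/3}$, $\nu:=\tfrac16\sqrt{36n^2-96n+61}$. Conditions on $u_0$: (C1) $u_0\in C^2(\overline{B_R}\setminus\{0\})$; (C2) $u_0$ radially symmetric; (C3) $u^*\ge u_0$; (C4) $\limsup_{r\searrow0}|r^{\frac32-n-\nu}(u^*(r)-u_0(r))|<\infty$; (C5) $u_0(R)=u^*(R)$; (C6) there is $C>0$ with $0\ge u_{0r}(r)\ge -Cr^{-2/3}$ for all $r\in(0,R)$. Problem $(\ast)$: $u_t=\Delta u+uu_r^3$ in $(B_R\setminus\{0\})\times(0,\infty)$, $u(0,t)=0$, $u(R,t)=u^*(R)$ for $t>0$, $u(\cdot,0)=u_0$; it has a unique classical solution $u\in C(\overline{B_R}\times[0,\infty))\cap C^{2,1}((B_R\setminus\{0\})\times(0,\infty))$ with $u_r\le0$. *)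

(* Defs.v *)
(* classical real analysis. Radially symmetric functions are
   represented as functions of r = |x| (and t). *)
From Stdlib Require Import Reals Lra.
Open Scope R_scope.

Definition cbrt (x : R) : R := if Rle_dec x 0 then 0 else Rpower x (1/3).

Definition alpha (n : nat) : R := cbrt (9 * INR n - 15).

Definition ustar (n : nat) (r : R) : R := - alpha n * cbrt r.

Definition nu (n : nat) : R := / 6 * sqrt (36 * INR n ^ 2 - 96 * INR n + 61).

Definition cont2_on (D : R -> R -> Prop) (f : R -> R -> R) : Prop :=
  forall r t, D r t -> forall eps, 0 < eps -> exists delta, 0 < delta /\
    forall r' t', D r' t' -> Rabs (r' - r) < delta -> Rabs (t' - t) < delta ->
      Rabs (f r' t' - f r t) < eps.

Definition closed_cyl (Rad : R) (r t : R) : Prop := 0 <= r <= Rad /\ 0 <= t.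
Definition open_cyl (Rad : R) (r t : R) : Prop := 0 < r < Rad /\ 0 < t.

(* (cond_C1): u0 in C^2 of (0,Rad] (closure of B_R minus 0, radially), expressed as:
   u0 is the restriction to (0,Rad] of a C^2 function g on (0,oo), with first
   derivative d1 and second derivative d2. *)
Definition cond_C1 (Rad : R) (u0 d1 : R -> R) : Prop :=
  exists g d2 : R -> R,
    (forall r, 0 < r <= Rad -> g r = u0 r) /\
    (forall r, 0 < r -> derivable_pt_lim g r (d1 r)) /\
    (forall r, 0 < r -> derivable_pt_lim d1 r (d2 r)) /\
    (forall r, 0 < r -> continuity_pt d2 r).

Definition cond_C3 (n : nat) (Rad : R) (u0 : R -> R) : Prop :=
  forall r, 0 <= r <= Rad -> ustar n r >= u0 r.

Definition cond_C4 (n : nat) (u0 : R -> R) : Prop :=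
  exists M delta, 0 < delta /\ forall r, 0 < r < delta ->
    Rabs (Rpower r (3/2 - INR n - nu n) * (ustar n r - u0 r)) <= M.

Definition cond_C5 (n : nat) (Rad : R) (u0 : R -> R) : Prop := u0 Rad = ustar n Rad.

(* (cond_C6), with d1 the derivative u0_r from (cond_C1) *)
Definition cond_C6 (Rad : R) (d1 : R -> R) : Prop :=
  exists C, 0 < C /\ forall r, 0 < r < Rad ->
    0 >= d1 r /\ d1 r >= - C * Rpower r (- (2/3)).

(* u is a classical (radial) solution of ( * ) with u_r <= 0:
   u in C([0,Rad] x [0,oo)) and C^{2,1} in (0,Rad) x (0,oo), with radial
   derivatives ur, urr and time derivative ut, satisfying
   u_t = u_rr + (n-1)/r u_r + u u_r^3 (radial form of Laplacian). *)
Definition is_solution (n : nat) (Rad : R) (u0 : R -> R) (u : R -> R -> R) : Prop :=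
  cont2_on (closed_cyl Rad) u /\
  exists ur urr ut : R -> R -> R,
    (forall r t, open_cyl Rad r t ->
       derivable_pt_lim (fun s => u s t) r (ur r t) /\
       derivable_pt_lim (fun s => ur s t) r (urr r t) /\
       derivable_pt_lim (fun s => u r s) t (ut r t)) /\
    cont2_on (open_cyl Rad) ur /\
    cont2_on (open_cyl Rad) urr /\
    cont2_on (open_cyl Rad) ut /\
    (forall r t, open_cyl Rad r t ->
       ut r t = urr r t + (INR n - 1) / r * ur r t + u r t * (ur r t) ^ 3) /\
    (forall t, 0 < t -> u 0 t = 0) /\
    (forall t, 0 < t -> u Rad t = ustar n Rad) /\
    (forall r, 0 <= r <= Rad -> u r 0 = u0 r) /\
    (forall r t, open_cyl Rad r t -> ur r t <= 0).

(* Main.v *)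
Require Import Defs.
From Stdlib Require Import Reals Lra.
From mathcomp Require all_boot all_order all_algebra.
From mathcomp Require all_classical all_reals all_analysis.
From mathcomp Require Rstruct Rstruct_topology.
Module EVT.
Import all_boot all_order all_algebra.
Import all_classical all_reals all_analysis.
Import Rstruct Rstruct_topology.
Import Order.TTheory GRing.Theory Num.Theory.
Import numFieldNormedType.Exports.
Local Open Scope classical_set_scope.
Local Open Scope ring_scope.

Lemma evt2 (a b c d : R) (f : R -> R -> R) : Rle a b -> Rle c d ->
  cont2_on (fun r t => Rle a r /\ Rle r b /\ Rle c t /\ Rle t d) f ->
  exists r0 t0, (Rle a r0 /\ Rle r0 b /\ Rle c t0 /\ Rle t0 d) /\
   forall r t, (Rle a r /\ Rle r b /\ Rle c t /\ Rle t d) -> Rle (f r t) (f r0 t0).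
Proof.
move=> /RleP ab /RleP cd cf.
pose A : set (R * R) := `[a, b] `*` `[c, d].
have cA : compact A by apply: compact_setX; exact: segment_compact.
have A0 : A !=set0 by exists (a, c); split => /=; rewrite in_itv /= ?lexx ?ab ?cd.
have := @compact_EVT_max _ R (fun p => f p.1 p.2) A A0 cA.
move=> H; have : {within A, continuous (fun p => f p.1 p.2)}.
  apply/subspace_continuousP => x Ax.
  rewrite /from_subspace /=.
  apply/cvg_ballP => e e0.
  rewrite near_withinE.

  case: x Ax => x1 x2 [/= ]; rewrite !in_itv /= => /andP[/RleP h1 /RleP h2] /andP[/RleP h3 /RleP h4].
  have [dl [/RltP dl0 Hd]] := cf x1 x2 (conj h1 (conj h2 (conj h3 h4))) e (elimT RltP e0).
  apply/nbhs_ballP; exists dl => //= [[y1 y2]] [/= b1 b2] [/= ]; rewrite !in_itv /= => /andP[/RleP k1 /RleP k2] /andP[/RleP k3 /RleP k4].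
  move: b1 b2; rewrite /ball /= -!RabsE => b1 b2.
  rewrite Rabs_minus_sym in b1; rewrite Rabs_minus_sym in b2.
  have := Hd y1 y2 (conj k1 (conj k2 (conj k3 k4))) (elimT RltP b1) (elimT RltP b2).
  by rewrite Rabs_minus_sym => /RltP.
move=> /H [[r0 t0]] /=; rewrite inE /= => -[] /= H1 H2 Hm.
move: H1 H2; rewrite !in_itv /= => /andP[/RleP h1 /RleP h2] /andP[/RleP h3 /RleP h4].
exists r0, t0; split; first by auto.
move=> r t [k1 [k2 [k3 k4]]]; apply/RleP; apply: (Hm (r, t)).
by rewrite inE /=; split; rewrite /= in_itv /=; apply/andP; split; apply/RleP.
Qed.

End EVT.
From Coquelicot Require Import Coquelicot.
Open Scope R_scope.

Lemma deriv_ext_loc (f g : R -> R) x l d :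
  0 < d -> (forall y, Rabs (y - x) < d -> f y = g y) ->
  derivable_pt_lim g x l -> derivable_pt_lim f x l.
Proof.
intros Hd He Hg eps Heps.
destruct (Hg eps Heps) as [d1 Hd1].
assert (Hm : 0 < Rmin d d1) by (apply Rmin_pos; [lra | apply cond_pos]).
exists (mkposreal _ Hm). intros h Hh Hh2. simpl in Hh2.
rewrite (He (x+h)), (He x).
- apply Hd1; auto. apply Rlt_le_trans with (1 := Hh2); apply Rmin_r.
- rewrite Rminus_diag, Rabs_R0; lra.
- replace (x + h - x) with h by ring. apply Rlt_le_trans with (1 := Hh2); apply Rmin_l.
Qed.

Lemma right_max (f : R -> R) x l d :
  derivable_pt_lim f x l -> 0 < d -> (forall h, 0 < h < d -> f (x + h) <= f x) -> l <= 0.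
Proof.
intros Hf Hd Hm. destruct (Rle_or_lt l 0) as [H|Hl]; auto. exfalso.
destruct (Hf l Hl) as [d1 Hd1].
assert (Hm0 : 0 < Rmin d d1) by (apply Rmin_pos; [lra | apply cond_pos]).
set (h := Rmin d d1 / 2).
assert (Hh : 0 < h) by (unfold h; lra).
assert (Hh1 : h < d) by (unfold h; pose proof (Rmin_l d d1); lra).
assert (Hh2 : h < d1) by (unfold h; pose proof (Rmin_r d d1); lra).
specialize (Hd1 h ltac:(lra) ltac:(rewrite Rabs_pos_eq; lra)).
apply Rabs_def2 in Hd1. destruct Hd1 as [_ H2].
assert (Hq : 0 < (f (x + h) - f x) / h) by lra.
specialize (Hm h (conj Hh Hh1)).
assert (0 < f (x + h) - f x).
{ replace (f (x + h) - f x) with ((f (x + h) - f x) / h * h) by (field; lra).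
  apply Rmult_lt_0_compat; lra. }
lra.
Qed.

Lemma left_max (f : R -> R) x l d :
  derivable_pt_lim f x l -> 0 < d -> (forall h, 0 < h < d -> f (x - h) <= f x) -> 0 <= l.
Proof.
intros Hf Hd Hm. destruct (Rle_or_lt 0 l) as [H|Hl]; auto. exfalso.
destruct (Hf (-l) ltac:(lra)) as [d1 Hd1].
assert (Hm0 : 0 < Rmin d d1) by (apply Rmin_pos; [lra | apply cond_pos]).
set (h := Rmin d d1 / 2).
assert (Hh : 0 < h) by (unfold h; lra).
assert (Hh1 : h < d) by (unfold h; pose proof (Rmin_l d d1); lra).
assert (Hh2 : h < d1) by (unfold h; pose proof (Rmin_r d d1); lra).
specialize (Hd1 (-h) ltac:(lra) ltac:(rewrite Rabs_Ropp, Rabs_pos_eq; lra)).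
apply Rabs_def2 in Hd1. destruct Hd1 as [H1 _].
assert (Hq : (f (x + - h) - f x) / (- h) < 0) by lra.
specialize (Hm h (conj Hh Hh1)).
assert (0 < f (x + - h) - f x).
{ replace (f (x + - h) - f x) with (- ((f (x + - h) - f x) / (- h)) * h) by (field; lra).
  apply Rmult_lt_0_compat; lra. }
replace (x + - h) with (x - h) in H by ring. lra.
Qed.

Lemma second_max (f f' : R -> R) x l d :
  0 < d -> (forall y, x <= y <= x + d -> derivable_pt_lim f y (f' y)) -> f' x = 0 ->
  derivable_pt_lim f' x l -> (forall y, x <= y <= x + d -> f y <= f x) -> l <= 0.
Proof.
intros Hd Hf H0 Hl Hm. destruct (Rle_or_lt l 0) as [H|Hl0]; auto. exfalso.
destruct (Hl l Hl0) as [d1 Hd1].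
assert (Hm0 : 0 < Rmin d d1) by (apply Rmin_pos; [lra | apply cond_pos]).
set (b := x + Rmin d d1 / 2).
assert (Hb1 : b <= x + d) by (unfold b; pose proof (Rmin_l d d1); lra).
assert (Hb2 : b - x < d1) by (unfold b; pose proof (Rmin_r d d1); lra).
destruct (MVT_cor2 f f' x b ltac:(unfold b; lra)) as [c [Hc1 Hc2]].
{ intros c Hc. apply Hf. lra. }
specialize (Hd1 (c - x) ltac:(lra) ltac:(rewrite Rabs_pos_eq; lra)).
replace (x + (c - x)) with c in Hd1 by ring. rewrite H0 in Hd1.
apply Rabs_def2 in Hd1. destruct Hd1 as [_ H2].
assert (0 < f' c).
{ replace (f' c) with ((f' c - 0) / (c - x) * (c - x)) by (field; lra).
  apply Rmult_lt_0_compat; lra. }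
assert (0 < b - x) by (unfold b; lra).
assert (0 < f b - f x) by (rewrite Hc1; apply Rmult_lt_0_compat; lra).
specialize (Hm b ltac:(lra)). lra.
Qed.

Lemma maxp Rad T (z zr zrr zt : R -> R -> R) :
  0 < Rad -> 0 <= T ->
  cont2_on (fun r t => 0 <= r /\ r <= Rad /\ 0 <= t <= T) z ->
  (forall r t, 0 < r < Rad -> 0 < t ->
     derivable_pt_lim (fun s => z s t) r (zr r t) /\
     derivable_pt_lim (fun s => zr s t) r (zrr r t) /\
     derivable_pt_lim (fun s => z r s) t (zt r t)) ->
  (forall r, 0 <= r <= Rad -> z r 0 <= 0) ->
  (forall t, 0 < t <= T -> z 0 t <= 0 /\ z Rad t <= 0) ->
  (forall r t, 0 < r < Rad -> 0 < t -> 0 < z r t -> zr r t = 0 -> zrr r t <= 0 -> zt r t < 0) ->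
  forall r t, 0 <= r <= Rad -> 0 <= t <= T -> z r t <= 0.
Proof.
intros HR HT Hc Hder Hinit Hbd Hint r t Hr Ht.
destruct (EVT.evt2 0 Rad 0 T z ltac:(lra) HT Hc) as [r0 [t0 [H0 Hmax]]].
destruct (Rle_or_lt (z r t) 0) as [|Hpos]; auto. exfalso.
assert (Hz0 : 0 < z r0 t0) by (pose proof (Hmax r t ltac:(lra)); lra).
assert (Ht0 : 0 < t0).
{ destruct (Rle_or_lt t0 0) as [Hle|]; auto.
  assert (t0 = 0) by lra. subst t0. pose proof (Hinit r0 ltac:(lra)); lra. }
assert (Hr0 : 0 < r0 < Rad).
{ destruct (Rle_or_lt r0 0) as [Hle|Hl].
  - assert (r0 = 0) by lra. subst r0. pose proof (Hbd t0 ltac:(lra)); lra.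
  - destruct (Rle_or_lt Rad r0) as [Hle|Hl2]; [|lra].
    assert (r0 = Rad) by lra. subst r0. pose proof (Hbd t0 ltac:(lra)); lra. }
destruct (Hder r0 t0 Hr0 Ht0) as [D1 [D2 D3]].
assert (Zr1 : zr r0 t0 <= 0).
{ apply (right_max (fun s => z s t0) r0 _ (Rad - r0) D1); [lra|].
  intros h Hh. apply Hmax. lra. }
assert (Zr2 : 0 <= zr r0 t0).
{ apply (left_max (fun s => z s t0) r0 _ r0 D1); [lra|].
  intros h Hh. apply Hmax. lra. }
assert (Zrr : zrr r0 t0 <= 0).
{ apply (second_max (fun s => z s t0) (fun s => zr s t0) r0 _ ((Rad - r0)/2)); [lra| | lra | exact D2 |].
  - intros y Hy. apply (Hder y t0); lra.
  - intros y Hy. apply Hmax. lra. }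
assert (Zt : 0 <= zt r0 t0).
{ apply (left_max (fun s => z r0 s) t0 _ t0 D3); [lra|].
  intros h Hh. apply Hmax. lra. }
pose proof (Hint r0 t0 Hr0 Ht0 Hz0 ltac:(lra) Zrr). lra.
Qed.

Definition ctn (f : R -> R) x := forall eps, 0 < eps -> exists d, 0 < d /\
  forall y, Rabs (y - x) < d -> Rabs (f y - f x) < eps.

Lemma ctn_of_deriv f x l : derivable_pt_lim f x l -> ctn f x.
Proof.
intros H.
assert (Hc : continuity_pt f x) by (apply derivable_continuous_pt; exists l; exact H).
intros eps Heps. destruct (Hc eps Heps) as [d [Hd Hdd]].
exists d; split; [lra|]. intros y Hy.
destruct (Req_dec y x) as [->|Hne].
- rewrite Rminus_diag, Rabs_R0; lra.
- apply (Hdd y). split; [split; [exact I| auto] | exact Hy].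
Qed.

Lemma cont2_r D (g : R -> R) : (forall r, ctn g r) -> cont2_on D (fun r t => g r).
Proof.
intros Hg r t _ eps Heps. destruct (Hg r eps Heps) as [d [Hd H]].
exists d; split; auto.
Qed.

Lemma cont2_t D (g : R -> R) : (forall t, ctn g t) -> cont2_on D (fun r t => g t).
Proof.
intros Hg r t _ eps Heps. destruct (Hg t eps Heps) as [d [Hd H]].
exists d; split; auto.
Qed.

Lemma cont2_sub D D' f : (forall r t, D' r t -> D r t) -> cont2_on D f -> cont2_on D' f.
Proof.
intros Hs Hf r t Hrt eps Heps. destruct (Hf r t (Hs _ _ Hrt) eps Heps) as [d [Hd H]].
exists d; split; auto.
Qed.

Lemma cont2_minus D f g : cont2_on D f -> cont2_on D g -> cont2_on D (fun r t => f r t - g r t).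
Proof.
intros Hf Hg r t Hrt eps Heps.
destruct (Hf r t Hrt (eps/2) ltac:(lra)) as [d1 [Hd1 H1]].
destruct (Hg r t Hrt (eps/2) ltac:(lra)) as [d2 [Hd2 H2]].
exists (Rmin d1 d2); split; [apply Rmin_pos; auto|].
intros r' t' HD Hr Ht.
assert (A1 := H1 r' t' HD ltac:(pose proof (Rmin_l d1 d2); lra) ltac:(pose proof (Rmin_l d1 d2); lra)).
assert (A2 := H2 r' t' HD ltac:(pose proof (Rmin_r d1 d2); lra) ltac:(pose proof (Rmin_r d1 d2); lra)).
replace (f r' t' - g r' t' - (f r t - g r t)) with ((f r' t' - f r t) - (g r' t' - g r t)) by ring.
eapply Rle_lt_trans; [apply Rabs_triang|]. rewrite Rabs_Ropp. lra.
Qed.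

Lemma cont2_mult D f g : cont2_on D f -> cont2_on D g -> cont2_on D (fun r t => f r t * g r t).
Proof.
intros Hf Hg r t Hrt eps Heps.
set (K := 1 + Rabs (f r t) + Rabs (g r t)).
assert (HK : 1 <= K) by (unfold K; pose proof (Rabs_pos (f r t)); pose proof (Rabs_pos (g r t)); lra).
set (e := Rmin 1 (eps / K)).
assert (He : 0 < e) by (unfold e; apply Rmin_pos; [lra| apply Rdiv_lt_0_compat; lra]).
assert (He1 : e <= 1) by apply Rmin_l.
assert (He2 : e * K <= eps).
{ unfold e. pose proof (Rmin_r 1 (eps/K)).
  replace eps with (eps / K * K) at 2 by (field; lra). apply Rmult_le_compat_r; lra. }
destruct (Hf r t Hrt e He) as [d1 [Hd1 H1]].
destruct (Hg r t Hrt e He) as [d2 [Hd2 H2]].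
exists (Rmin d1 d2); split; [apply Rmin_pos; auto|].
intros r' t' HD Hr Ht.
assert (A1 := H1 r' t' HD ltac:(pose proof (Rmin_l d1 d2); lra) ltac:(pose proof (Rmin_l d1 d2); lra)).
assert (A2 := H2 r' t' HD ltac:(pose proof (Rmin_r d1 d2); lra) ltac:(pose proof (Rmin_r d1 d2); lra)).
set (a := f r' t' - f r t) in *. set (b := g r' t' - g r t) in *.
replace (f r' t' * g r' t' - f r t * g r t) with (a * b + f r t * b + g r t * a)
  by (unfold a, b; ring).
assert (Rabs (a * b + f r t * b + g r t * a) <= Rabs a * Rabs b + Rabs (f r t) * Rabs b + Rabs (g r t) * Rabs a).
{ eapply Rle_trans; [apply Rabs_triang|]. rewrite !Rabs_mult.
  pose proof (Rabs_triang (a*b) (f r t * b)) as T. rewrite !Rabs_mult in T. lra. }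
assert (Rabs a * Rabs b <= e * Rabs b) by (apply Rmult_le_compat_r; [apply Rabs_pos|lra]).
assert (e * Rabs b < e * e) by (apply Rmult_lt_compat_l; lra).
assert (Rabs (f r t) * Rabs b <= Rabs (f r t) * e) by (apply Rmult_le_compat_l; [apply Rabs_pos|lra]).
assert (Rabs (g r t) * Rabs a <= Rabs (g r t) * e) by (apply Rmult_le_compat_l; [apply Rabs_pos|lra]).
assert (e * e <= e * 1) by (apply Rmult_le_compat_l; lra).
assert (e * K = e * 1 + Rabs (f r t) * e + Rabs (g r t) * e) by (unfold K; ring).
lra.
Qed.

Lemma pw_ctn a : 0 < a -> forall x, ctn (fun r => if Rle_dec r 0 then 0 else Rpower r a) x.
Proof.
intros Ha x.
destruct (Rlt_or_le x 0) as [Hx|Hx].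
{ intros eps Heps. exists (-x); split; [lra|]. intros y Hy.
  destruct (Rle_dec y 0) as [|n1]; [|apply Rabs_def2 in Hy; lra].
  destruct (Rle_dec x 0) as [|n2]; [|lra]. rewrite Rminus_diag, Rabs_R0; lra. }
destruct (Rle_lt_or_eq_dec 0 x Hx) as [Hx0|Hx0].
- intros eps Heps.
  destruct (ctn_of_deriv _ _ _ (derivable_pt_lim_power x a Hx0) eps Heps) as [d [Hd H]].
  exists (Rmin d x); split; [apply Rmin_pos; lra|]. intros y Hy.
  pose proof (Rmin_l d x); pose proof (Rmin_r d x).
  apply Rabs_def2 in Hy as Hy'.
  destruct (Rle_dec y 0) as [|n1]; [lra|]. destruct (Rle_dec x 0) as [|n2]; [lra|].
  apply H. lra.
- subst x. intros eps Heps. exists (Rpower eps (/ a)); split; [apply exp_pos|].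
  intros y Hy. rewrite Rminus_0_r in Hy.
  destruct (Rle_dec 0 0) as [_|n]; [|lra]. rewrite Rminus_0_r.
  destruct (Rle_dec y 0) as [|n1]; [rewrite Rabs_R0; lra|].
  assert (Hp : 0 < Rpower y a) by apply exp_pos.
  rewrite Rabs_pos_eq by lra.
  apply Rabs_def2 in Hy.
  replace eps with (Rpower (Rpower eps (/ a)) a).
  + apply Rlt_Rpower_l; lra.
  + rewrite Rpower_mult, Rinv_l by lra. apply Rpower_1; lra.
Qed.

Definition Q (r : R) := Rpower r (1/6).
Definition qz (r : R) := if Rle_dec r 0 then 0 else Rpower r (1/6).

Lemma Q_pos r : 0 < Q r.
Proof. apply exp_pos. Qed.

Lemma Rpower_nat_pow x k : 0 < x -> Rpower x (INR k / 6) = Q x ^ k.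
Proof.
intros Hx. unfold Q. rewrite <- Rpower_pow by apply exp_pos.
rewrite Rpower_mult. f_equal. field.
Qed.

Lemma Q6 r : 0 < r -> Q r ^ 6 = r.
Proof.
intros Hr. rewrite <- Rpower_nat_pow by auto.
replace (INR 6 / 6) with 1 by (simpl; field). apply Rpower_1; auto.
Qed.

Lemma cbrt_Q r : 0 < r -> cbrt r = Q r ^ 2.
Proof.
intros Hr. unfold cbrt. destruct (Rle_dec r 0); [lra|].
rewrite <- Rpower_nat_pow by auto. f_equal. simpl; field.
Qed.

Lemma qz_Q r : 0 < r -> qz r = Q r.
Proof. intros Hr. unfold qz, Q. destruct (Rle_dec r 0); [lra|auto]. Qed.

Lemma cbrt_nonneg r : 0 <= cbrt r.
Proof. unfold cbrt. destruct (Rle_dec r 0); [lra|]. left; apply exp_pos. Qed.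

Lemma qz_nonneg r : 0 <= qz r.
Proof. unfold qz. destruct (Rle_dec r 0); [lra|]. left; apply exp_pos. Qed.

Lemma cbrt_0 : cbrt 0 = 0.
Proof. unfold cbrt. destruct (Rle_dec 0 0); [auto|lra]. Qed.

Lemma qz_0 : qz 0 = 0.
Proof. unfold qz. destruct (Rle_dec 0 0); [auto|lra]. Qed.

Lemma alpha_facts n : (2 <= n)%nat -> 0 < alpha n /\ alpha n ^ 3 = 9 * INR n - 15.
Proof.
intros Hn. apply le_INR in Hn. simpl in Hn.
unfold alpha, cbrt. destruct (Rle_dec (9 * INR n - 15) 0); [lra|].
split; [apply exp_pos|].
rewrite <- Rpower_pow by apply exp_pos. rewrite Rpower_mult.
replace (1/3 * INR 3) with 1 by (simpl; field). apply Rpower_1; lra.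
Qed.

Lemma Q_deriv x : 0 < x -> derivable_pt_lim Q x (/ (6 * Q x ^ 5)).
Proof.
intros Hx. unfold Q at 1.
replace (/ (6 * Q x ^ 5)) with (1/6 * Rpower x (1/6 - 1)).
- apply derivable_pt_lim_power; auto.
- replace (1/6 - 1) with (1/6 + Ropp 1) by ring. rewrite Rpower_plus, Rpower_Ropp, Rpower_1 by auto.
  fold (Q x). rewrite <- (Q6 x) at 2 by auto. pose proof (Q_pos x). field. lra.
Qed.

Definition vrf (a s r : R) := -(2*a*Q r + s)/(6*Q r^5).
Definition vrrf (a s r : R) := (8*a*Q r + 5*s)/(36*Q r^11).

Lemma V_deriv a s x : 0 < x -> derivable_pt_lim (fun r => -a*Q r^2 - s*Q r) x (vrf a s x).
Proof.
intros Hx. pose proof (Q_pos x) as Hq.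
assert (H : derivable_pt_lim (fun y => -a*y^2 - s*y) (Q x) (-a*2*Q x - s)).
{ apply is_derive_Reals. auto_derive; auto. ring. }
pose proof (derivable_pt_lim_comp Q _ x _ _ (Q_deriv x Hx) H) as Hc.
unfold comp in Hc. unfold vrf.
replace (-(2*a*Q x + s)/(6*Q x^5)) with ((-a*2*Q x - s) * / (6 * Q x ^ 5)) by (field; lra).
exact Hc.
Qed.

Lemma vr_deriv a s x : 0 < x -> derivable_pt_lim (vrf a s) x (vrrf a s x).
Proof.
intros Hx. pose proof (Q_pos x) as Hq.
assert (H : derivable_pt_lim (fun y => -(2*a*y + s)/(6*y^5)) (Q x)
              ((8*a*Q x + 5*s)/(6 * Q x ^ 6))).
{ apply is_derive_Reals. auto_derive.
  - repeat split; auto. apply Rgt_not_eq. unfold Rgt. 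
    repeat apply Rmult_lt_0_compat; lra.
  - field. lra. }
pose proof (derivable_pt_lim_comp Q _ x _ _ (Q_deriv x Hx) H) as Hc.
unfold comp in Hc. unfold vrrf.
replace ((8*a*Q x + 5*s)/(36*Q x^11)) with ((8*a*Q x + 5*s)/(6 * Q x ^ 6) * / (6 * Q x ^ 5)) by (field; lra).
exact Hc.
Qed.

Lemma G_identity (a s q N : R) : 0 < q -> a ^ 3 = 9 * N - 15 ->
  (8*a*q + 5*s)/(36*q^11) + (N - 1) / q^6 * (-(2*a*q + s)/(6*q^5))
   + (-a*q^2 - s*q) * (-(2*a*q + s)/(6*q^5))^3
  = (s*q^3*(16*a^3+6) + 18*a^2*q^2*s^2 + 7*a*q*s^3 + s^4) / (216 * q^14).
Proof.
intros Hq Ha. replace N with ((a^3 + 15)/9) by lra. field. lra.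
Qed.

Lemma dminus f g x l1 l2 : derivable_pt_lim f x l1 -> derivable_pt_lim g x l2 ->
  derivable_pt_lim (fun y => f y - g y) x (l1 - l2).
Proof. intros. apply derivable_pt_lim_minus; auto. Qed.

Lemma ctn_const k x : ctn (fun _ => k) x.
Proof. intros eps He. exists 1; split; [lra|]. intros. rewrite Rminus_diag, Rabs_R0; lra. Qed.

Lemma u0_zero Rad (u : R -> R -> R) : 0 < Rad -> cont2_on (closed_cyl Rad) u ->
  (forall t, 0 < t -> u 0 t = 0) -> u 0 0 = 0.
Proof.
intros HR Hc H0. destruct (Req_dec (u 0 0) 0) as [|Hne]; auto. exfalso.
assert (Hp : 0 < Rabs (u 0 0)) by (apply Rabs_pos_lt; auto).
destruct (Hc 0 0 ltac:(unfold closed_cyl; lra) _ Hp) as [d [Hd H]].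
specialize (H 0 (d/2) ltac:(unfold closed_cyl; lra)
  ltac:(rewrite Rminus_diag, Rabs_R0; lra) ltac:(rewrite Rminus_0_r, Rabs_pos_eq; lra)).
rewrite H0 in H by lra. rewrite Rminus_0_l, Rabs_Ropp in H. lra.
Qed.

Lemma ctn_ustar n r : ctn (ustar n) r.
Proof.
pose proof (pw_ctn (1/3) ltac:(lra)) as Hc.
intros eps He. unfold ustar.
destruct (Req_dec (alpha n) 0) as [H0|Hne].
{ exists 1; split; [lra|]. intros. rewrite H0. replace (- 0 * cbrt y - - 0 * cbrt r) with 0 by ring.
  rewrite Rabs_R0; lra. }
assert (Ha : 0 < Rabs (alpha n)) by (apply Rabs_pos_lt; auto).
destruct (Hc r (eps / Rabs (alpha n)) ltac:(apply Rdiv_lt_0_compat; lra)) as [d [Hd H]].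
exists d; split; auto. intros y Hy. specialize (H y Hy).
replace (- alpha n * cbrt y - - alpha n * cbrt r) with (- alpha n * (cbrt y - cbrt r)) by ring.
rewrite Rabs_mult, Rabs_Ropp. unfold cbrt.
apply Rmult_lt_reg_r with (/ Rabs (alpha n)); [apply Rinv_0_lt_compat; lra|].
replace (Rabs (alpha n) * Rabs ((if Rle_dec y 0 then 0 else Rpower y (1 / 3)) -
    (if Rle_dec r 0 then 0 else Rpower r (1 / 3))) * / Rabs (alpha n))
  with (Rabs ((if Rle_dec y 0 then 0 else Rpower y (1 / 3)) -
    (if Rle_dec r 0 then 0 else Rpower r (1 / 3)))) by (field; lra).
exact H.
Qed.

Lemma Rpower_small r a b : 0 < r < 1 -> b <= a -> Rpower r a <= Rpower r b.
Proof.
intros Hr Hab. unfold Rpower.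
assert (Hl : ln r < 0) by (rewrite <- ln_1; apply ln_increasing; lra).
assert (a * ln r <= b * ln r) by nra.
destruct H as [H|H]; [left; apply exp_increasing; auto | rewrite H; lra].
Qed.

Lemma nu_nonneg n : 0 <= nu n.
Proof. unfold nu. apply Rmult_le_pos; [left; apply Rinv_0_lt_compat; lra | apply sqrt_pos]. Qed.

Lemma ustar_nonpos n r : (2 <= n)%nat -> ustar n r <= 0.
Proof.
intros Hn. destruct (alpha_facts n Hn) as [Ha _]. unfold ustar.
pose proof (cbrt_nonneg r). nra.
Qed.

Lemma init_bound n Rad u0 (u : R -> R -> R) : (2 <= n)%nat -> 0 < Rad ->
  cont2_on (closed_cyl Rad) u -> (forall r, 0 <= r <= Rad -> u r 0 = u0 r) -> u0 0 = 0 ->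
  cond_C4 n u0 -> exists c, 0 < c /\ forall r, 0 <= r <= Rad -> ustar n r - c * qz r <= u0 r.
Proof.
intros Hn HR Hc Hi H00 [M [d [Hd HM]]].
assert (Hc' : cont2_on (fun r t => 0 <= r /\ r <= Rad /\ 0 <= t <= 0) (fun r t => 0 - u r t)).
{ pose proof (cont2_minus (fun r t => 0 <= r /\ r <= Rad /\ 0 <= t <= 0) (fun r t => 0) u
    (cont2_r _ (fun _ => 0) (ctn_const 0))
    (cont2_sub (closed_cyl Rad) (fun r t => 0 <= r /\ r <= Rad /\ 0 <= t <= 0) u ltac:(intros r t Hrt; unfold closed_cyl; lra) Hc)) as H.
  exact H. }
destruct (EVT.evt2 0 Rad 0 0 _ ltac:(lra) ltac:(lra) Hc') as [r1 [t1 [_ Hm]]].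
set (m := 0 - u r1 t1) in *.
assert (Hmb : forall r, 0 <= r <= Rad -> - u0 r <= m).
{ intros r Hr. rewrite <- (Hi r Hr). pose proof (Hm r 0 ltac:(lra)). lra. }
assert (Hm0 : 0 <= m) by (pose proof (Hmb 0 ltac:(lra)); lra).
set (d1 := Rmin d 1).
assert (Hd1 : 0 < d1) by (apply Rmin_pos; lra).
assert (Hd1a : d1 <= d) by apply Rmin_l.
assert (Hd1b : d1 <= 1) by apply Rmin_r.
pose proof (Q_pos d1) as HQd.
set (c := Rabs M + m / Q d1 + 1).
assert (Hmq : 0 <= m / Q d1) by (apply Rdiv_le_0_compat; lra).
pose proof (Rabs_pos M) as HMa.
exists c; split; [unfold c; lra|].
intros r Hr.
destruct (Req_dec r 0) as [->|Hr0].
{ rewrite qz_0, H00. unfold ustar. rewrite cbrt_0. lra. }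
assert (Hrp : 0 < r) by lra.
rewrite qz_Q by auto. pose proof (Q_pos r) as HQr.
pose proof (ustar_nonpos n r Hn) as Hus.
destruct (Rlt_or_le r d1) as [Hrd|Hrd].
-
  set (D := ustar n r - u0 r).
  destruct (Rle_or_lt D 0) as [HD|HD].
  { assert (0 <= c * Q r) by (apply Rmult_le_pos; unfold c; lra). unfold D in HD. lra. }
  set (e := 3 / 2 - INR n - nu n).
  specialize (HM r ltac:(lra)). fold e in HM. fold D in HM.
  assert (Hpe : 0 < Rpower r e) by apply exp_pos.
  rewrite Rabs_pos_eq in HM by (apply Rmult_le_pos; lra).
  assert (HD2 : D <= M * Rpower r (- e)).
  { rewrite Rpower_Ropp.
    apply Rmult_le_reg_l with (Rpower r e); auto.
    replace (Rpower r e * (M * / Rpower r e)) with M by (field; lra). lra. }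
  assert (He : Rpower r (- e) <= Q r).
  { unfold Q. apply Rpower_small; [lra|].
    unfold e. pose proof (nu_nonneg n). apply le_INR in Hn. simpl in Hn. lra. }
  assert (Hpe2 : 0 < Rpower r (- e)) by apply exp_pos.
  assert (M * Rpower r (-e) <= Rabs M * Q r).
  { apply Rle_trans with (Rabs M * Rpower r (-e)).
    - apply Rmult_le_compat_r; [lra| apply Rle_abs].
    - apply Rmult_le_compat_l; lra. }
  assert (Rabs M * Q r <= c * Q r) by (apply Rmult_le_compat_r; unfold c; lra).
  unfold D in HD2. lra.
-
  assert (HQ : Q d1 <= Q r) by (unfold Q; apply Rle_Rpower_l; lra).
  pose proof (Hmb r Hr).
  assert (m <= m / Q d1 * Q r).
  { apply Rle_trans with (m / Q d1 * Q d1).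
    - right; field; lra.
    - apply Rmult_le_compat_l; lra. }
  assert (m / Q d1 * Q r <= c * Q r) by (apply Rmult_le_compat_r; unfold c; lra).
  lra.
Qed.

Lemma lower_cmp n Rad u0 u c : (2 <= n)%nat -> 0 < Rad -> is_solution n Rad u0 u -> 0 < c ->
  (forall r, 0 <= r <= Rad -> ustar n r - c * qz r <= u0 r) ->
  forall T, 0 <= T -> forall r t, 0 <= r <= Rad -> 0 <= t <= T ->
    ustar n r - c * exp (- (1 / (72 * Rad ^ 2)) * t) * qz r - u r t <= 0.
Proof.
intros Hn HR Hsol Hc Hin T.
destruct Hsol as [Hcont [ur [urr [ut [Hder [_ [_ [_ [Heq [Hu0t [HuR [Hinit _]]]]]]]]]]]].
destruct (alpha_facts n Hn) as [Ha Ha3].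
set (mu := 1 / (72 * Rad ^ 2)).
assert (Hmu : 0 < mu) by (unfold mu; apply Rdiv_lt_0_compat; [lra| apply Rmult_lt_0_compat; [lra| apply pow_lt; lra]]).
set (S := fun t => c * exp (- mu * t)).
assert (HS : forall t, 0 < S t) by (intros; unfold S; apply Rmult_lt_0_compat; [lra|apply exp_pos]).
intros HT.
apply (maxp Rad T (fun r t => ustar n r - S t * qz r - u r t)
  (fun r t => vrf (alpha n) (S t) r - ur r t)
  (fun r t => vrrf (alpha n) (S t) r - urr r t)
  (fun r t => mu * S t * qz r - ut r t)); auto.
-
  pose proof (cont2_minus (fun r t => 0 <= r /\ r <= Rad /\ 0 <= t <= T) _ u
    (cont2_minus _ (fun r t => ustar n r) (fun r t => S t * qz r)
       (cont2_r _ (ustar n) (ctn_ustar n))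
       (cont2_mult _ (fun r t => S t) (fun r t => qz r)
          (cont2_t _ S ltac:(intros t; apply (ctn_of_deriv _ _ (- mu * S t)); unfold S;
                              apply is_derive_Reals; auto_derive; auto; ring))
          (cont2_r _ qz (pw_ctn (1/6) ltac:(lra)))))
    (cont2_sub (closed_cyl Rad) (fun r t => 0 <= r /\ r <= Rad /\ 0 <= t <= T) u
       ltac:(intros r t Hrt; unfold closed_cyl; lra) Hcont)) as H.
  exact H.
-
  intros r t Hr Ht. destruct (Hder r t (conj Hr Ht)) as [D1 [D2 D3]].
  split; [|split].
  + apply (deriv_ext_loc _ (fun s => (- alpha n * Q s ^ 2 - S t * Q s) - u s t) r _ r); [lra| |].
    * intros y Hy. apply Rabs_def2 in Hy.
      unfold ustar. rewrite cbrt_Q, qz_Q by lra. ring.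
    * apply dminus; auto. apply V_deriv; lra.
  + apply dminus; auto. apply vr_deriv; lra.
  + apply dminus; auto.
    unfold S. apply is_derive_Reals. auto_derive; auto. ring.
-
  intros r Hr. rewrite (Hinit r Hr). unfold S. rewrite Rmult_0_r, exp_0, Rmult_1_r.
  pose proof (Hin r Hr). lra.
-
  intros t Ht. rewrite Hu0t, HuR by lra. rewrite qz_0. unfold ustar. rewrite cbrt_0.
  pose proof (qz_nonneg Rad). pose proof (HS t). split; [lra|].
  assert (0 <= S t * qz Rad) by (apply Rmult_le_pos; lra). lra.
-
  intros r t Hr Ht Hz Hzr Hzrr.
  rewrite (Heq r t (conj Hr Ht)).
  assert (Hur : ur r t = vrf (alpha n) (S t) r) by lra.
  rewrite Hur.
  pose proof (Q_pos r) as Hq. pose proof (HS t) as Hs.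
  set (q := Q r) in *. set (s := S t) in *. set (a := alpha n) in *.
  assert (Hrq : r = q ^ 6) by (unfold q; rewrite Q6; lra).
  assert (HV : ustar n r - s * qz r = - a * q ^ 2 - s * q).
  { unfold ustar. rewrite cbrt_Q, qz_Q by lra. fold q. fold a. ring. }
  rewrite HV in Hz. rewrite qz_Q by lra. fold q.
  set (vr := vrf a s r). set (vrr := vrrf a s r).
  assert (Hvr : vr = -(2*a*q + s)/(6*q^5)) by reflexivity.
  assert (Hvrr : vrr = (8*a*q + 5*s)/(36*q^11)) by reflexivity.
  assert (HG := G_identity a s q (INR n) Hq Ha3).
  rewrite <- Hvr, <- Hvrr, <- Hrq in HG.
  set (G := vrr + (INR n - 1) / r * vr + (- a * q ^ 2 - s * q) * vr ^ 3) in HG.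
  set (z := - a * q ^ 2 - s * q - u r t) in Hz.
  assert (Hdec : mu * s * q - (urr r t + (INR n - 1) / r * vr + u r t * vr ^ 3)
                 = (mu * s * q - G) + (vrr - urr r t) + z * vr ^ 3) by (unfold G, z; ring).
  rewrite Hdec.
  assert (Hvrn : vr < 0).
  { rewrite Hvr. unfold Rdiv.
    assert (0 < (2 * a * q + s) * / (6 * q ^ 5)).
    { apply Rmult_lt_0_compat.
      - apply Rplus_lt_0_compat; [apply Rmult_lt_0_compat; lra | lra].
      - apply Rinv_0_lt_compat. apply Rmult_lt_0_compat; [lra| apply pow_lt; lra]. }
    lra. }
  assert (Hv3 : z * vr ^ 3 < 0).
  { assert (vr ^ 3 < 0) by (replace (vr ^ 3) with (- ((- vr) * (- vr) * (- vr))) by ring;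
                            assert (0 < (- vr) * (- vr) * (- vr)) by (repeat apply Rmult_lt_0_compat; lra); lra).
    nra. }
  assert (HGm : mu * s * q <= G).
  { rewrite HG. clearbody s.
    assert (Hq14 : 0 < 216 * q ^ 14) by (apply Rmult_lt_0_compat; [lra | apply pow_lt; lra]).
    apply Rmult_le_reg_r with (216 * q ^ 14); auto.
    unfold Rdiv. rewrite (Rmult_assoc _ (/ (216 * q ^ 14)) (216 * q ^ 14)), Rinv_l, Rmult_1_r by lra.
    assert (Hr2 : q ^ 12 <= Rad ^ 2).
    { replace (q ^ 12) with (r ^ 2) by (rewrite Hrq; ring). apply pow_incr; lra. }
    assert (HR2 : 0 < Rad ^ 2) by (apply pow_lt; lra).
    assert (Hmu2 : mu * q ^ 12 <= 1 / 72).
    { unfold mu. apply Rmult_le_reg_r with (72 * Rad ^ 2); [lra|].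
      replace (1 / (72 * Rad ^ 2) * q ^ 12 * (72 * Rad ^ 2)) with (q ^ 12) by (field; lra).
      lra. }
    assert (Hpos : 0 <= 18 * a ^ 2 * q ^ 2 * s ^ 2 + 7 * a * q * s ^ 3 + s ^ 4).
    { assert (0 <= 18 * a ^ 2 * q ^ 2 * s ^ 2) by (repeat apply Rmult_le_pos; try lra; apply pow_le; lra).
      assert (0 <= 7 * a * q * s ^ 3) by (repeat apply Rmult_le_pos; try lra; apply pow_le; lra).
      assert (0 <= s ^ 4) by (apply pow_le; lra). lra. }
    assert (Ha3p : 0 <= a ^ 3) by (apply pow_le; lra).
    assert (Hsq3 : 0 < s * q ^ 3) by (apply Rmult_lt_0_compat; [lra | apply pow_lt; lra]).
    assert (Hk : mu * s * q * (216 * q ^ 14) = 216 * (mu * q ^ 12) * (s * q ^ 3)) by ring.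
    rewrite Hk.
    assert (216 * (mu * q ^ 12) * (s * q ^ 3) <= 3 * (s * q ^ 3)) by
      (apply Rmult_le_compat_r; lra).
    assert (3 * (s * q ^ 3) <= s * q ^ 3 * (16 * a ^ 3 + 6)) by nra.
    lra. }
  assert (vrr - urr r t <= 0) by exact Hzrr. lra.
Qed.

Lemma upper_cmp n Rad u0 u : (2 <= n)%nat -> 0 < Rad -> is_solution n Rad u0 u ->
  cond_C3 n Rad u0 ->
  forall T, 0 <= T -> forall r t, 0 <= r <= Rad -> 0 <= t <= T -> u r t - ustar n r <= 0.
Proof.
intros Hn HR Hsol HC3 T HT.
destruct Hsol as [Hcont [ur [urr [ut [Hder [_ [_ [_ [Heq [Hu0t [HuR [Hinit _]]]]]]]]]]]].
destruct (alpha_facts n Hn) as [Ha Ha3].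
apply (maxp Rad T (fun r t => u r t - ustar n r)
  (fun r t => ur r t - vrf (alpha n) 0 r)
  (fun r t => urr r t - vrrf (alpha n) 0 r)
  (fun r t => ut r t)); auto.
- pose proof (cont2_minus (fun r t => 0 <= r /\ r <= Rad /\ 0 <= t <= T) u (fun r t => ustar n r)
    (cont2_sub (closed_cyl Rad) (fun r t => 0 <= r /\ r <= Rad /\ 0 <= t <= T) u
       ltac:(intros r t Hrt; unfold closed_cyl; lra) Hcont)
    (cont2_r _ (ustar n) (ctn_ustar n))) as H.
  exact H.
- intros r t Hr Ht. destruct (Hder r t (conj Hr Ht)) as [D1 [D2 D3]].
  split; [|split].
  + apply (deriv_ext_loc _ (fun s => u s t - (- alpha n * Q s ^ 2 - 0 * Q s)) r _ r); [lra| |].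
    * intros y Hy. apply Rabs_def2 in Hy.
      unfold ustar. rewrite cbrt_Q by lra. ring.
    * apply dminus; auto. apply V_deriv; lra.
  + apply dminus; auto. apply vr_deriv; lra.
  + replace (ut r t) with (ut r t - 0) by ring. apply dminus; auto.
    apply derivable_pt_lim_const.
- intros r Hr. rewrite (Hinit r Hr). pose proof (HC3 r Hr). lra.
- intros t Ht. rewrite Hu0t, HuR by lra. unfold ustar. rewrite cbrt_0. split; lra.
- intros r t Hr Ht Hz Hzr Hzrr.
  rewrite (Heq r t (conj Hr Ht)).
  assert (Hur : ur r t = vrf (alpha n) 0 r) by lra.
  rewrite Hur.
  pose proof (Q_pos r) as Hq.
  set (q := Q r) in *. set (a := alpha n) in *.
  assert (Hrq : r = q ^ 6) by (unfold q; rewrite Q6; lra).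
  assert (HV : ustar n r = - a * q ^ 2 - 0 * q).
  { unfold ustar. rewrite cbrt_Q by lra. fold q. fold a. ring. }
  rewrite HV in Hz.
  set (vr := vrf a 0 r) in *. set (vrr := vrrf a 0 r) in *.
  assert (Hvr : vr = -(2*a*q + 0)/(6*q^5)) by reflexivity.
  assert (Hvrr : vrr = (8*a*q + 5*0)/(36*q^11)) by reflexivity.
  assert (HG := G_identity a 0 q (INR n) Hq Ha3).
  rewrite <- Hvr, <- Hvrr, <- Hrq in HG.
  assert (HG0 : vrr + (INR n - 1) / r * vr + (- a * q ^ 2 - 0 * q) * vr ^ 3 = 0).
  { rewrite HG. field. lra. }
  set (z := u r t - (- a * q ^ 2 - 0 * q)) in Hz.
  assert (Hdec : urr r t + (INR n - 1) / r * vr + u r t * vr ^ 3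
                 = (urr r t - vrr) + z * vr ^ 3 +
                   (vrr + (INR n - 1) / r * vr + (- a * q ^ 2 - 0 * q) * vr ^ 3)) by (unfold z; ring).
  rewrite HG0, Rplus_0_r in Hdec.
  rewrite Hdec.
  assert (Hvrn : vr < 0).
  { rewrite Hvr. unfold Rdiv.
    assert (0 < (2 * a * q + 0) * / (6 * q ^ 5)).
    { apply Rmult_lt_0_compat.
      - assert (0 < 2 * a * q) by (apply Rmult_lt_0_compat; lra). lra.
      - apply Rinv_0_lt_compat. apply Rmult_lt_0_compat; [lra| apply pow_lt; lra]. }
    lra. }
  assert (Hv3 : z * vr ^ 3 < 0).
  { assert (vr ^ 3 < 0) by (replace (vr ^ 3) with (- ((- vr) * (- vr) * (- vr))) by ring;
                            assert (0 < (- vr) * (- vr) * (- vr)) by (repeat apply Rmult_lt_0_compat; lra); lra).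
    nra. }
  assert (urr r t - vrr <= 0) by exact Hzrr. lra.
Qed.

Theorem theorem3 (n : nat) (Rad : R) (u0 d1 : R -> R) (u : R -> R -> R) :
  (2 <= n)%nat ->
  0 < Rad ->
  Rad < sqrt (3 / 8 * (3 * INR n - 5) * (2 * INR n - 3) ^ 3) ->
  cond_C1 Rad u0 d1 -> cond_C3 n Rad u0 -> cond_C4 n u0 -> cond_C5 n Rad u0 -> cond_C6 Rad d1 ->
  is_solution n Rad u0 u ->
  exists c mu, 0 < c /\ 0 < mu /\
    forall t, 0 <= t -> forall r, 0 <= r < Rad ->
      Rabs (u r t - ustar n r) <= c * exp (- mu * t).
Proof.
intros Hn HR _ _ HC3 HC4 _ _ Hsol.
pose proof Hsol as Hsol'.
destruct Hsol' as [Hcont [ur [urr [ut [Hder [_ [_ [_ [Heq [Hu0t [HuR [Hinit _]]]]]]]]]]]].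
assert (H00 : u0 0 = 0).
{ rewrite <- (Hinit 0 ltac:(lra)). apply (u0_zero Rad); auto. }
destruct (init_bound n Rad u0 u Hn HR Hcont Hinit H00 HC4) as [c [Hc Hin]].
pose proof (Q_pos Rad) as HQR.
exists (c * Q Rad), (1 / (72 * Rad ^ 2)). split; [apply Rmult_lt_0_compat; lra|].
split; [apply Rdiv_lt_0_compat; [lra| apply Rmult_lt_0_compat; [lra| apply pow_lt; lra]]|].
intros t Ht r Hr.
pose proof (lower_cmp n Rad u0 u c Hn HR Hsol Hc Hin t Ht r t ltac:(lra) ltac:(lra)) as L.
pose proof (upper_cmp n Rad u0 u Hn HR Hsol HC3 t Ht r t ltac:(lra) ltac:(lra)) as U.
set (E := exp (- (1 / (72 * Rad ^ 2)) * t)) in *.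
assert (HE : 0 < E) by apply exp_pos.
assert (Hq : qz r <= Q Rad).
{ destruct (Req_dec r 0) as [->|Hr0].
  - rewrite qz_0. left; apply HQR.
  - rewrite qz_Q by lra. unfold Q. apply Rle_Rpower_l; lra. }
pose proof (qz_nonneg r).
assert (c * E * qz r <= c * Q Rad * E).
{ replace (c * Q Rad * E) with (c * E * Q Rad) by ring.
  apply Rmult_le_compat_l; [apply Rmult_le_pos; lra | lra]. }
rewrite Rabs_left1 by lra. lra.
Qed.
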